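(* Let $\mathcal{H},\mathcal{K}$ be complex Hilbert spaces and $(f_*,f^* ):(\mathsf{P}(\mathcal{H}),\mathsf{L}(\mathcal{H}),\bar e_{\mathcal{H}})\to(\mathsf{P}(\mathcal{K}),\mathsf{L}(\mathcal{K}),\bar e_{\mathcal{K}})$ a Chu morphism with $f_*$ injective. Then for all nonzero $\phi,\psi\in\mathcal{H}$: $\phi\perp\psi$ if and only if the rays $f_*([\phi])$ and $f_*([\psi])$ are orthogonal.
   Context: A Chu morphism $(X,A,e)\to(X',A',e')$ between Chu spaces over $[0,1]$ is a pair $(f_*:X\to X',f^*:A'\to A)$ with $e(x,f^*(a'))=e'(f_*(x),a')$ for all $x\in X,a'\in A'$. For a complex Hilbert space $\mathcal{H}$: $\mathsf{L}(\mathcal{H})$ is the set of closed subspaces, $P_S$ the orthogonal projector onto $S$, $\mathsf{P}(\mathcal{H})$ the set of rays $[\psi]=\{\lambda\psi:\lambda\in\mathbb{C}\}$, $\psi\ne0$, and $\bar e_{\mathcal{H}}([\psi],S)=\|P_S\psi\|^2/\|\psi\|^2$. *)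

(* Defs.v *)
From HB Require Import structures.
From mathcomp Require Import all_boot all_order all_algebra.
From mathcomp Require Import boolp classical_sets reals.
From mathcomp Require Import complex.
Set Implicit Arguments. Unset Strict Implicit. Unset Printing Implicit Defensive.
Import Order.TTheory GRing.Theory Num.Theory.
Local Open Scope ring_scope.
Local Open Scope classical_set_scope.

Section Hilbert.
Variables (R : realType) (H : lmodType R[i]) (ip : H -> H -> R[i]).

Definition hnorm (x : H) : R := Num.sqrt (complex.Re (ip x x)).

Definition converges_to (u : nat -> H) (x : H) : Prop :=
  forall eps : R, 0 < eps -> exists N : nat, forall n, (N <= n)%N -> hnorm (u n - x) < eps.

Definition cauchy_seq (u : nat -> H) : Prop :=
  forall eps : R, 0 < eps -> exists N : nat,
    forall m n, (N <= m)%N -> (N <= n)%N -> hnorm (u m - u n) < eps.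

Record is_hilbert : Prop := {
  ip_linear : forall (a : R[i]) (x y z : H), ip (a *: x + y) z = a * ip x z + ip y z;
  ip_conj_sym : forall x y : H, ip y x = conjc (ip x y);
  ip_pos : forall x : H, 0 <= ip x x;
  ip_definite : forall x : H, ip x x = 0 -> x = 0;
  ip_complete : forall u : nat -> H, cauchy_seq u -> exists x, converges_to u x }.

Definition closed_subspace (S : set H) : Prop :=
  [/\ S 0,
      (forall x y, S x -> S y -> S (x + y)),
      (forall (a : R[i]) x, S x -> S (a *: x)) &
      (forall (u : nat -> H) x, (forall n, S (u n)) -> converges_to u x -> S x)].

Definition Lsub := {S : set H | closed_subspace S}.

Definition proj (S : set H) (x : H) : H :=
  xget 0 [set p | S p /\ forall s, S s -> ip (x - p) s = 0].

Definition ray_set (psi : H) : set H := [set a *: psi | a in [set: R[i]]].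

Definition Ray := {r : set H | exists psi : H, psi != 0 /\ r = ray_set psi}.

Definition mkray (psi : H) (h : psi != 0) : Ray :=
  exist (fun r => exists psi, psi != 0 /\ r = ray_set psi) (ray_set psi)
        (ex_intro _ psi (conj h erefl)).

Definition ray_rep (r : Ray) : H := projT1 (cid (proj2_sig r)).

Definition ebar (r : Ray) (S : Lsub) : R :=
  hnorm (proj (proj1_sig S) (ray_rep r)) ^+ 2 / hnorm (ray_rep r) ^+ 2.

Definition ray_orth (r1 r2 : Ray) : Prop :=
  forall u v, proj1_sig r1 u -> proj1_sig r2 v -> ip u v = 0.

End Hilbert.

(* Chu morphisms between Chu spaces over [0,1] (valued in R) *)
Definition chu_morphism (R : realType) (X A X' A' : Type)
  (e : X -> A -> R) (e' : X' -> A' -> R) (fl : X -> X') (fu : A' -> A) : Prop :=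
  forall (x : X) (a' : A'), e x (fu a') = e' (fl x) a'.

(* Main.v *)
Require Import Defs.
From HB Require Import structures.
From mathcomp Require Import all_boot all_order all_algebra.
From mathcomp Require Import boolp classical_sets reals.
From mathcomp Require Import complex.
Import Order.TTheory GRing.Theory Num.Theory.
Set Implicit Arguments. Unset Strict Implicit.
Local Open Scope ring_scope.

Section Aux.
Variables (R : realType) (H : lmodType R[i]) (ip : H -> H -> R[i]) (hH : is_hilbert ip).

Lemma conjD (a b : R[i]) : conjc (a + b) = conjc a + conjc b.
Proof. exact: rmorphD. Qed.
Lemma conjM (a b : R[i]) : conjc (a * b) = conjc a * conjc b.
Proof. exact: rmorphM. Qed.
Lemma conj0 : conjc (0 : R[i]) = 0.
Proof. exact: rmorph0. Qed.
Lemma conjN (a : R[i]) : conjc (- a) = - conjc a.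
Proof. exact: rmorphN. Qed.
Lemma conj1 : conjc (1 : R[i]) = 1.
Proof. exact: rmorph1. Qed.

Lemma ipDl x y z : ip (x + y) z = ip x z + ip y z.
Proof. by rewrite -[x in LHS]scale1r (ip_linear hH) mul1r. Qed.
Lemma ip0l z : ip 0 z = 0.
Proof. by apply: (addrI (ip 0 z)); rewrite addr0 -ipDl addr0. Qed.
Lemma ipZl a x z : ip (a *: x) z = a * ip x z.
Proof. by rewrite -[a *: x]addr0 (ip_linear hH) ip0l addr0. Qed.
Lemma ipNl x z : ip (- x) z = - ip x z.
Proof. by rewrite -scaleN1r ipZl mulN1r. Qed.
Lemma ipBl x y z : ip (x - y) z = ip x z - ip y z.
Proof. by rewrite ipDl ipNl. Qed.
Lemma ipDr x y z : ip x (y + z) = ip x y + ip x z.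
Proof.
by rewrite (ip_conj_sym hH (y + z) x) ipDl conjD -!(ip_conj_sym hH).
Qed.
Lemma ipZr a x y : ip x (a *: y) = conjc a * ip x y.
Proof.
by rewrite (ip_conj_sym hH (a *: y) x) ipZl conjM -!(ip_conj_sym hH).
Qed.
Lemma ip0r x : ip x 0 = 0.
Proof. by rewrite -(scale0r 0) ipZr conj0 mul0r. Qed.
Lemma ipNr x z : ip x (- z) = - ip x z.
Proof. by rewrite -scaleN1r ipZr conjN conj1 mulN1r. Qed.

Lemma ipxx_real x : ip x x = (complex.Re (ip x x))%:C%C.
Proof.
have := ip_pos hH x; rewrite lecE => /andP[/eqP h _].
by move: h; case: (ip x x) => a b /= ->.
Qed.
Lemma Re_ge0 x : 0 <= complex.Re (ip x x).
Proof. by have := ip_pos hH x; rewrite lecE => /andP[_ h]. Qed.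
Lemma hnorm2 x : hnorm ip x ^+ 2 = complex.Re (ip x x).
Proof. by rewrite /hnorm sqr_sqrtr // Re_ge0. Qed.
Lemma Re_eq0 x : complex.Re (ip x x) = 0 -> x = 0.
Proof. by move=> h; apply: (ip_definite hH); rewrite ipxx_real h. Qed.
Lemma hnorm_eq0 x : hnorm ip x = 0 -> x = 0.
Proof. by move=> h; apply: Re_eq0; rewrite -hnorm2 h expr0n. Qed.
Lemma hnorm0 : hnorm ip 0 = 0.
Proof. by rewrite /hnorm ip0l sqrtr0. Qed.
Lemma ipxx_neq0 x : x != 0 -> ip x x != 0.
Proof. by apply: contra => /eqP /(ip_definite hH) ->. Qed.
Lemma ReD (a b : R[i]) : complex.Re (a + b) = complex.Re a + complex.Re b.
Proof. by case: a; case: b. Qed.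

Lemma pyth a b : ip a b = 0 -> complex.Re (ip (a + b) (a + b)) = complex.Re (ip a a) + complex.Re (ip b b).
Proof.
move=> h; rewrite ipDl !ipDr h (ip_conj_sym hH a b) h.
rewrite conj0.
by rewrite addr0 add0r ReD.
Qed.

Lemma proj_eq (S : set H) (x p : H) : (forall u v, S u -> S v -> S (u - v)) ->
  S p -> (forall s, S s -> ip (x - p) s = 0) -> proj ip S x = p.
Proof.
move=> SB Sp op; apply: xget_unique => [|q [Sq oq]]; first by [].
apply/eqP; rewrite -subr_eq0; apply/eqP; apply: (ip_definite hH).
have e : q - p = (x - p) - (x - q) by rewrite opprB [RHS]addrC addrA subrK.
have Sqp : S (q - p) := SB _ _ Sq Sp.
by rewrite {1}e ipBl op // oq // subrr.
Qed.


Lemma closed_sub (S : set H) : closed_subspace ip S ->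
  forall u v, S u -> S v -> S (u - v).
Proof. by case=> _ SD SZ _ u v Su Sv; rewrite -scaleN1r; apply: SD (SZ _ _ Sv). Qed.

Lemma hnorm_neq0 v : v != 0 -> hnorm ip v ^+ 2 != 0.
Proof.
move=> hv; apply/negP => /eqP; rewrite hnorm2 => /Re_eq0 h.
by move: hv; rewrite h eqxx.
Qed.

Lemma proj_mem (S : set H) x : proj ip S x != 0 -> S (proj ip S x).
Proof. by rewrite /proj; case: xgetP => [y _ [Sy _] _ | _] //; rewrite eqxx. Qed.

Lemma proj_line (S : set H) (w v : H) : closed_subspace ip S -> w != 0 -> S w ->
  (forall a, S a -> exists c, a = c *: w) -> proj ip S v = (ip v w / ip w w) *: w.
Proof.
move=> hS hw Sw Sl; have [S0 SD SZ _] := hS.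
apply: proj_eq; first exact: closed_sub; first exact: SZ.
move=> s /Sl [c ->]; rewrite ipZr ipBl ipZl divfK ?subrr ?mulr0 //.
exact: ipxx_neq0.
Qed.

Lemma line_zero (S : set H) (w v : H) : closed_subspace ip S -> w != 0 -> S w ->
  (forall a, S a -> exists c, a = c *: w) -> v != 0 ->
  (hnorm ip (proj ip S v) ^+ 2 / hnorm ip v ^+ 2 = 0 <-> ip v w = 0).
Proof.
move=> hS hw Sw Sl hv; rewrite (@proj_line S w v hS hw Sw Sl); split.
  move/eqP; rewrite mulf_eq0 invr_eq0 (negbTE (hnorm_neq0 hv)) orbF expf_eq0 /=.
  move=> /eqP /hnorm_eq0 /eqP; rewrite scaler_eq0 (negbTE hw) orbF.
  by rewrite mulf_eq0 invr_eq0 (negbTE (ipxx_neq0 hw)) orbF => /eqP.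
by move=> ->; rewrite mul0r scale0r hnorm0 expr2 mulr0 mul0r.
Qed.

Lemma line_one (S : set H) (w v : H) : closed_subspace ip S -> w != 0 -> S w ->
  (forall a, S a -> exists c, a = c *: w) -> v != 0 ->
  hnorm ip (proj ip S v) ^+ 2 / hnorm ip v ^+ 2 = 1 -> S v.
Proof.
move=> hS hw Sw Sl hv; rewrite (@proj_line S w v hS hw Sw Sl) => e.
set c := ip v w / ip w w in e.
have e2 : hnorm ip (c *: w) ^+ 2 = hnorm ip v ^+ 2.
  by rewrite -[RHS]mul1r -e divfK // hnorm_neq0.
have o : ip (c *: w) (v - c *: w) = 0.
  rewrite ipZl (ip_conj_sym hH (v - c *: w) w) ipBl ipZl /c divfK ?subrr ?conj0 ?mulr0 //.
  exact: ipxx_neq0.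
have := pyth o; rewrite addrC subrK -!hnorm2 e2 => /eqP.
rewrite eq_sym -subr_eq0 addrC addKr hnorm2 => /eqP /Re_eq0 /eqP.
rewrite subr_eq0 => /eqP ->.
by have [_ _ SZ _] := hS; apply: SZ.
Qed.

Lemma line_closed (w : H) : w != 0 -> closed_subspace ip (ray_set w).
Proof.
move=> hw; split.
- by exists 0 => //; rewrite scale0r.
- by move=> x y [a _ <-] [b _ <-]; exists (a + b) => //; rewrite scalerDl.
- by move=> c x [a _ <-]; exists (c * a) => //; rewrite scalerA.
move=> u x hu hc.
set c := ip x w / ip w w; set z := x - c *: w.
have oz : ip z w = 0 by rewrite /z ipBl ipZl /c divfK ?subrr // ipxx_neq0.
suff z0 : z = 0.
  by exists c => //; move/eqP: z0; rewrite subr_eq0 => /eqP ->.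
apply: Re_eq0; apply/eqP; rewrite eq_le Re_ge0 andbT leNgt; apply/negP => dpos.
have sp : 0 < Num.sqrt (complex.Re (ip z z)) by rewrite sqrtr_gt0.
have [N hN] := hc _ sp.
have := hN N (leqnn N); rewrite /hnorm ltr_sqrt //.
have [a _ ha] := hu N.
have e : u N - x = (a - c) *: w + (- z).
  by rewrite -ha /z scalerBl opprB addrA subrK.
have ho : ip ((a - c) *: w) (- z) = 0.
  by rewrite ipZl ipNr (ip_conj_sym hH z w) oz conj0 oppr0 mulr0.
rewrite e (pyth ho) ipNl ipNr opprK.
have := Re_ge0 ((a - c) *: w).
set d1 := complex.Re _; set d2 := complex.Re _.
move=> h1 h2; have : d1 < 0 by rewrite -(ltrD2r d2) add0r.
by rewrite ltNge h1.
Qed.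

End Aux.

Section Rays.
Variables (R : realType) (H : lmodType R[i]).

Lemma rep_spec (r : Ray H) : ray_rep r != 0 /\ proj1_sig r = ray_set (ray_rep r).
Proof. by rewrite /ray_rep; case: (cid (proj2_sig r)) => v hv /=. Qed.

Lemma mem_ray_set (v : H) : ray_set v v.
Proof. by exists 1 => //; rewrite scale1r. Qed.

Lemma line_sub (w a : H) : ray_set w a -> exists c, a = c *: w.
Proof. by case=> c _ <-; exists c. Qed.

Lemma ray_set_scale (v : H) c : c != 0 -> ray_set (c *: v) = ray_set v.
Proof.
move=> c0; apply/seteqP; split => y /= [a _ <-].
  by exists (a * c) => //; rewrite scalerA.
by exists (a / c) => //; rewrite scalerA divfK.
Qed.

Lemma in_line_ray (w v : H) : v != 0 -> ray_set w v -> ray_set v = ray_set w.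
Proof.
move=> hv [b _ hb]; rewrite -hb ray_set_scale //.
by apply: contraNneq hv => b0; rewrite -hb b0 scale0r.
Qed.

Lemma rep_mkray (psi : H) (h : psi != 0) :
  exists c, c != 0 /\ ray_rep (mkray h) = c *: psi.
Proof.
have [hv e] := rep_spec (mkray h); rewrite /= in e.
have : ray_set psi (ray_rep (mkray h)) by rewrite e; exact: mem_ray_set.
case=> c _ hc; exists c; split=> //.
by apply: contraNneq hv => c0; rewrite -hc c0 scale0r.
Qed.

Lemma ray_eq (r1 r2 : Ray H) : proj1_sig r1 = proj1_sig r2 -> r1 = r2.
Proof.
move: r1 r2 => [s1 p1] [s2 p2] /= e; subst s2; congr exist; exact: Prop_irrelevance.
Qed.

End Rays.


Theorem proposition3p7 (R : realType)
  (H : lmodType R[i]) (ipH : H -> H -> R[i]) (hH : is_hilbert ipH)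
  (K : lmodType R[i]) (ipK : K -> K -> R[i]) (hK : is_hilbert ipK)
  (fl : Ray H -> Ray K) (fu : Lsub ipK -> Lsub ipH)
  (hchu : chu_morphism (@ebar R H ipH) (@ebar R K ipK) fl fu)
  (hinj : injective fl) :
  forall (phi psi : H) (hphi : phi != 0) (hpsi : psi != 0),
    ipH phi psi = 0 <-> ray_orth ipK (fl (mkray hphi)) (fl (mkray hpsi)).
Proof.
move=> phi psi hphi hpsi.
have [hws eS] := rep_spec (fl (mkray hpsi)).
set ws := ray_rep (fl (mkray hpsi)) in hws eS *.
have clT := line_closed hK hws.
pose T : Lsub ipK := exist _ (ray_set ws) clT.
have hA := proj2_sig (fu T).
set A := proj1_sig (fu T) in hA.
have Asub : forall a, A a -> exists c, a = c *: psi.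
  move=> a Aa; have [->|ha] := eqVneq a 0; first by exists 0; rewrite scale0r.
  have [c [c0 hc]] := rep_mkray ha.
  have e1 : ebar (mkray ha) (fu T) = 1.
    rewrite /ebar (@proj_eq _ _ _ hH A _ (ray_rep (mkray ha))).
    - by rewrite divff // hnorm_neq0 // hc scaler_eq0 negb_or c0.
    - exact: closed_sub hA.
    - by rewrite hc; case: hA => _ _ SZ _; exact: SZ.
    - by move=> s _; rewrite subrr ip0l.
  rewrite hchu in e1.
  have [hv ev] := rep_spec (fl (mkray ha)).
  have vin : ray_set ws (ray_rep (fl (mkray ha))).
    apply: (line_one hK clT hws (mem_ray_set ws) (@line_sub _ _ ws) hv).
    exact: e1.
  have efl : fl (mkray ha) = fl (mkray hpsi).
    by apply: ray_eq; rewrite ev eS (in_line_ray hv vin).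
  have := hinj _ _ efl => /(congr1 (@proj1_sig _ _)) /= ea.
  by apply: line_sub; rewrite -ea; exact: mem_ray_set.
have psiA : A psi.
  have e1 : ebar (mkray hpsi) (fu T) = 1.
    rewrite hchu /ebar /= (proj_line hK ws clT hws (mem_ray_set ws) (@line_sub _ _ ws)).
    by rewrite divff ?ipxx_neq0 // scale1r divff // hnorm_neq0.
  set p := proj ipH A (ray_rep (mkray hpsi)).
  have p0 : p != 0.
    apply/negP => /eqP p0; move: e1; rewrite /ebar -/A -/p p0 (hnorm0 hH) expr2 mulr0 mul0r.
    by move/eqP; rewrite eq_sym oner_eq0.
  have [d hd] := Asub _ (proj_mem p0).
  have d0 : d != 0 by apply: contraNneq p0 => d0; apply/eqP; rewrite /p hd d0 scale0r.
  have -> : psi = d^-1 *: p by rewrite /p hd scalerA mulVf // scale1r.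
  by case: hA => _ _ SZ _; apply: SZ; apply: proj_mem.
have [c [c0 hc]] := rep_mkray hphi.
have [hvr evr] := rep_spec (fl (mkray hphi)).
have keyH : ebar (mkray hphi) (fu T) = 0 <-> ipH phi psi = 0.
  have hur : ray_rep (mkray hphi) != 0 by rewrite hc scaler_eq0 negb_or c0.
  rewrite /ebar -/A (line_zero hH hA hpsi psiA Asub hur).
  rewrite hc (ipZl hH); split; last by move=> ->; rewrite mulr0.
  by move/eqP; rewrite mulf_eq0 (negbTE c0) /= => /eqP.
have keyK : ebar (fl (mkray hphi)) T = 0 <->
    ipK (ray_rep (fl (mkray hphi))) ws = 0.
  by rewrite /ebar /= (line_zero hK clT hws (mem_ray_set ws) (@line_sub _ _ ws) hvr).
rewrite -keyH hchu keyK; split.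
  move=> o u v; rewrite evr eS => -[a _ <-] [b _ <-].
  by rewrite (ipZl hK) (ipZr hK) o !mulr0.
by move=> o; apply: o; rewrite ?evr ?eS; exact: mem_ray_set.
Qed.
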